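(* For every nonempty graph $G$ and every integer $t\ge 1$, \[\hat r(tK_2,G)\ge (t-1)\Delta(G)+|E(G)|.\] Consequently, $\hat r_\infty(G)\ge \Delta(G)/|E(G)|$.
   Context: All graphs are finite and simple; a graph is nonempty if it has at least one edge. $\Delta(G)$ is the maximum degree, $tK_2$ is a matching with $t$ edges. For graphs $F,G,H$, $F\to(G,H)$ means every red--blue coloring of $E(F)$ contains a red copy of $G$ or a blue copy of $H$, and $\hat r(G,H)=\min\{|E(F)|:F\to(G,H)\}$. For a nonempty graph $G$, $\hat r_\infty(G)=\lim_{t\to\infty}\frac{\hat r(tK_2,G)}{t\,|E(G)|}$ (this limit exists). *)

(* Defs.v *)
From Stdlib Require Import Reals ClassicalEpsilon.
From Coquelicot Require Import Coquelicot.
From mathcomp Require Import all_boot.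

Set Implicit Arguments.
Unset Strict Implicit.
Unset Printing Implicit Defensive.

Definition simple_graph (V : finType) (e : rel V) : Prop :=
  symmetric e /\ irreflexive e.

Definition edge_set (V : finType) (e : rel V) : {set {set V}} :=
  [set [set p.1; p.2] | p in [pred p : V * V | e p.1 p.2]].

Definition nedges (V : finType) (e : rel V) : nat := #|edge_set e|.

Definition maxdeg (V : finType) (e : rel V) : nat :=
  \max_(v : V) #|[set u | e v u]|.

Definition nonempty_graph (V : finType) (e : rel V) : Prop :=
  exists u v, e u v.

(* The matching tK_2 on vertices 'I_t * bool: edges {(i,false),(i,true)}. *)
Definition matching_rel (t : nat) : rel ('I_t * bool) :=
  fun x y => (x.1 == y.1) && (x.2 != y.2).

(* A 2-colouring of the edges of a host graph on 'I_n: each edge {u,v},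
   seen as the set [set u; v], gets a colour (true = red, false = blue). *)
Definition coloring (n : nat) := {set 'I_n} -> bool.

(* A copy of G (subgraph, not necessarily induced) in host graph F all of whose
   edges have colour col. *)
Definition mono_copy (V : finType) (g : rel V) (n : nat) (F : rel 'I_n)
  (c : coloring n) (col : bool) : Prop :=
  exists f : V -> 'I_n, injective f /\
    forall u v, g u v -> F (f u) (f v) /\ c [set f u; f v] = col.

Definition arrows (n : nat) (F : rel 'I_n)
  (V1 : finType) (g1 : rel V1) (V2 : finType) (g2 : rel V2) : Prop :=
  forall c : coloring n, mono_copy g1 F c true \/ mono_copy g2 F c false.

(* m is the number of edges of some graph F with F -> (G,H). Any finite
   graph is isomorphic to one on 'I_n, so this ranges over all finite graphs. *)
Definition arrow_size (V1 : finType) (g1 : rel V1) (V2 : finType) (g2 : rel V2)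
  (m : nat) : Prop :=
  exists n (F : rel 'I_n), simple_graph F /\ arrows F g1 g2 /\ nedges F = m.

Definition is_size_ramsey (V1 : finType) (g1 : rel V1) (V2 : finType) (g2 : rel V2)
  (m : nat) : Prop :=
  arrow_size g1 g2 m /\ forall k, arrow_size g1 g2 k -> (m <= k)%N.

(* The size Ramsey number hat r(G,H) = min{|E(F)| : F -> (G,H)}
   (defaults to 0 if no such F exists, which never happens for the
   graphs considered). *)
Definition size_ramsey (V1 : finType) (g1 : rel V1) (V2 : finType) (g2 : rel V2)
  : nat :=
  match excluded_middle_informative (exists m, is_size_ramsey g1 g2 m) with
  | left h => proj1_sig (constructive_indefinite_description _ h)
  | right _ => 0
  end.

Definition r_infty (V : finType) (g : rel V) : Rbar :=
  Lim_seq (fun t => (INR (size_ramsey (@matching_rel t) g)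
                     / (INR t * INR (nedges g)))%R).

(* Main.v *)
Require Import Defs.
From Stdlib Require Import Reals Classical ClassicalEpsilon.
From Coquelicot Require Import Coquelicot.
From mathcomp Require Import all_boot zify.
Set Implicit Arguments.
Unset Strict Implicit.

Definition copyin (V W : finType) (g : rel V) (X : {set {set W}}) : Prop :=
  exists f : V -> W, injective f /\ forall u v, g u v -> [set f u; f v] \in X.

Lemma copy_mono (V W : finType) (g : rel V) (X Y : {set {set W}}) :
  X \subset Y -> copyin g X -> copyin g Y.
Proof.
move=> sXY [f [fi hf]]; exists f; split=> // u v huv.
exact: (subsetP sXY _ (hf _ _ huv)).
Qed.

Lemma in_edge_set (W : finType) (F : rel W) a b : F a b -> [set a; b] \in edge_set F.
Proof. by move=> h; apply/imsetP; exists (a, b). Qed.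

Lemma copy_card (V W : finType) (g : rel V) (X : {set {set W}}) :
  copyin g X -> (nedges g <= #|X|)%N.
Proof.
move=> [f [fi hf]]; rewrite /nedges.
rewrite -(card_imset _ (imset_inj fi)).
apply: subset_leq_card; apply/subsetP => s /imsetP [s' /imsetP [p hp ->] ->].
by rewrite imsetU1 imset_set1; apply: hf.
Qed.

Lemma copy_deg (V W : finType) (g : rel V) (X : {set {set W}}) f w :
  irreflexive g -> injective f -> (forall u v, g u v -> [set f u; f v] \in X) ->
  (#|[set u | g w u]| <= #|X :&: [set s : {set W} | f w \in s]|)%N.
Proof.
move=> irr fi hf.
have inj : {in [set u | g w u] &, injective (fun u => [set f w; f u])}.
  move=> u u'; rewrite !inE => hu hu' e.
  have : f u \in [set f w; f u'] by rewrite -e !inE eqxx orbT.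
  rewrite !inE => /orP [/eqP /fi eu | /eqP /fi //].
  by rewrite eu irr in hu.
rewrite -(card_in_imset inj); apply: subset_leq_card.
apply/subsetP => s /imsetP [u]; rewrite !inE => hu ->.
by rewrite hf // !inE eqxx.
Qed.

Lemma maxdeg_attained (V : finType) (g : rel V) :
  nonempty_graph g -> exists w, maxdeg g = #|[set u | g w u]|.
Proof.
move=> [u [v _]].
have h : (0 < #|V|)%N by apply/card_gt0P; exists u.
have [w hw] := eq_bigmax (fun v => #|[set u | g v u]|) h.
by exists w; rewrite /maxdeg hw.
Qed.

Lemma removal (V W : finType) (g : rel V) : simple_graph g -> nonempty_graph g ->
  forall k (X : {set {set W}}), (#|X| < k * maxdeg g + nedges g)%N ->
  exists S : {set W}, (#|S| <= k)%N /\ ~ copyin g [set s in X | [disjoint s & S]].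
Proof.
move=> [sym irr] ne; elim=> [|k IH] X hX.
  exists set0; split; first by rewrite cards0.
  move/copy_card => h.
  have : (#|[set s in X | [disjoint s & set0]]| <= #|X|)%N.
    by apply: subset_leq_card; apply/subsetP => s; rewrite inE => /andP [].
  lia.
case: (boolP [exists v : W, (maxdeg g <= #|X :&: [set s : {set W} | v \in s]|)%N]).
  case/existsP => v hv.
  have hc := cardsID [set s : {set W} | v \in s] X.
  have hX1 : (#|X :\: [set s : {set W} | v \in s]| < k * maxdeg g + nedges g)%N.
    rewrite mulSn in hX; move: hX hv hc.
    set a := #|X :&: _|; set b := #|X :\: _|; set c := #|X|.
    lia.
  have [S1 [cS1 nS1]] := IH _ hX1.
  exists (v |: S1); split.
    rewrite cardsU1; case: (v \in S1) => /=; lia.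
  move=> C; apply: nS1; apply: copy_mono C; apply/subsetP => s.
  rewrite !inE => /andP [sX dis]; rewrite sX andbT.
  apply/andP; split.
    by rewrite (disjointFl dis) // !inE eqxx.
  apply: disjointWr dis; apply/subsetP => x hx; rewrite !inE hx orbT.
  done.
move=> hn; exists set0; split; first by rewrite cards0.
move=> C.
have [f [fi hf]] : copyin g X.
  apply: copy_mono C; apply/subsetP => s; rewrite inE => /andP [].
  done.
have [w hw] := maxdeg_attained ne.
have := copy_deg w irr fi hf; rewrite -hw => hle.
move/negP: hn; apply; apply/existsP; exists (f w); exact hle.
Qed.
Lemma lower_bound (V : finType) (g : rel V) : simple_graph g -> nonempty_graph g ->
  forall t, (1 <= t)%N -> forall m, arrow_size (@matching_rel t) g m ->
  ((t - 1) * maxdeg g + nedges g <= m)%N.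
Proof.
move=> sg ne t ht m [n [F [sF [ar <-]]]].
rewrite leqNgt; apply/negP => hlt.
have [S [cS nS]] := removal sg ne hlt.
pose c : coloring n := fun s => ~~ [disjoint s & S].
case: (ar c) => [[f [fi hf]] | [f [fi hf]]].
  pose h := fun i : 'I_t => f (i, f (i, false) \notin S).
  have hS : forall i, h i \in S.
    move=> i; rewrite /h; case: (boolP (f (i, false) \in S)) => //= hn.
    apply/negPn/negP => hn2.
    have [_ ] := hf (i, false) (i, true) ltac:(by rewrite /matching_rel /= eqxx).
    rewrite /c disjoints_subset; move/negP; apply; apply/subsetP => x.
    by rewrite !inE => /orP [] /eqP ->.
  have hi : injective h.
    by move=> i j /fi [].
  have : (#|h @: [set: 'I_t]| <= #|S|)%N.
    by apply: subset_leq_card; apply/subsetP => x /imsetP [i _ ->].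
  rewrite card_imset // cardsT card_ord; lia.
apply: nS; exists f; split=> // u v huv.
have [hF hc] := hf u v huv.
rewrite inE in_edge_set //=.
by move: hc; rewrite /c => /negbFE.
Qed.
Lemma arrow_exists (V : finType) (g : rel V) : simple_graph g -> nonempty_graph g ->
  forall t, exists m, arrow_size (@matching_rel t) g m.
Proof.
move=> [sym irr] [u0 _] t.
pose T := ('I_t * V)%type.
pose phi := fun x : T => enum_rank x.
pose F : rel 'I_#|{: T}| := fun x y =>
  ((enum_val x).1 == (enum_val y).1) && g (enum_val x).2 (enum_val y).2.
exists (nedges F), #|{: T}|, F; split; last split=> //.
  split.
    by move=> x y; rewrite /F eq_sym sym.
  by move=> x; rewrite /F irr andbF.
have phiI : injective phi by apply: enum_rank_inj.
have Fphi : forall i j a b, F (phi (i, a)) (phi (j, b)) = (i == j) && g a b.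
  by move=> i j a b; rewrite /F /phi !enum_rankK.
move=> c.
case: (boolP [forall i : 'I_t, [exists p : V * V,
          g p.1 p.2 && c [set phi (i, p.1); phi (i, p.2)]]]).
  move=> /forallP hall; left.
  pose q := fun i => odflt (u0, u0)
     [pick p : V * V | g p.1 p.2 && c [set phi (i, p.1); phi (i, p.2)]].
  have hq : forall i, g (q i).1 (q i).2 && c [set phi (i, (q i).1); phi (i, (q i).2)].
    move=> i; rewrite /q; case: pickP => //= H.
    by move: (hall i) => /existsP [p]; rewrite H.
  pose f := fun x : 'I_t * bool =>
     phi (x.1, if x.2 then (q x.1).2 else (q x.1).1).
  exists f; split.
    move=> [i b] [j b'] /phiI [eij]; rewrite /= in eij; subst j.
    have := hq i => /andP [hg _].
    by case: b; case: b' => //= e; rewrite e irr in hg.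
  move=> [i b] [j b']; rewrite /matching_rel /= => /andP [/eqP eij nb]; subst j.
  have := hq i => /andP [hg hc].
  rewrite /f /= Fphi eqxx /=.
  case: b b' nb => [] [] //= _; split=> //.
    by rewrite sym.
  by rewrite setUC.
rewrite negb_forall => /existsP [i]; rewrite negb_exists => /forallP hi.
right; exists (fun a => phi (i, a)); split.
  by move=> a b /phiI [].
move=> u v huv; rewrite Fphi eqxx huv; split=> //.
by move: (hi (u, v)); rewrite /= huv /= => /negbTE.
Qed.

Lemma min_exists (P : nat -> Prop) m : P m ->
  exists m', P m' /\ forall k, P k -> (m' <= k)%N.
Proof.
elim: m {-2}m (leqnn m) => [|N IH] m hm Pm.
  exists m; split=> // k _; move: hm; rewrite leqn0 => /eqP ->; done.
case: (classic (exists k, (k < m)%N /\ P k)) => [[k [hk Pk]] | H].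
  by apply: (IH k) => //; lia.
exists m; split=> // k Pk; rewrite leqNgt; apply/negP => hk; apply: H; by exists k.
Qed.

Lemma size_ramsey_spec (V1 V2 : finType) (g1 : rel V1) (g2 : rel V2) :
  (exists m, arrow_size g1 g2 m) -> arrow_size g1 g2 (size_ramsey g1 g2).
Proof.
move=> [m hm].
rewrite /size_ramsey; case: excluded_middle_informative => [h | h].
  by case: (constructive_indefinite_description _ h) => x [].
exfalso; apply: h; have [m' [h1 h2]] := min_exists hm; exists m'; split=> //.
Qed.
Lemma maxdeg_le_nedges (V : finType) (g : rel V) : simple_graph g -> nonempty_graph g ->
  (maxdeg g <= nedges g)%N.
Proof.
move=> [sym irr] ne.
have [w ->] := maxdeg_attained ne.
apply: leq_trans (copy_deg (X := edge_set g) (f := id) w irr (@inj_id _) _) _.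
  by move=> u v huv; apply: in_edge_set.
by apply: subset_leq_card; apply: subsetIl.
Qed.

Lemma nedges_gt0 (V : finType) (g : rel V) : nonempty_graph g -> (0 < nedges g)%N.
Proof.
move=> [u [v h]]; apply/card_gt0P; exists [set u; v]; exact: in_edge_set.
Qed.

Theorem proposition3p2 (V : finType) (g : rel V) :
  simple_graph g -> nonempty_graph g ->
  (forall t : nat, (1 <= t)%N ->
     ((t - 1) * maxdeg g + nedges g <= size_ramsey (@matching_rel t) g)%N)
  /\ Rbar_le (Rbar.Finite (Rdiv (INR (maxdeg g)) (INR (nedges g)))) (r_infty g).
Proof.
move=> sg ne.
have LB : forall t : nat, (1 <= t)%N ->
     ((t - 1) * maxdeg g + nedges g <= size_ramsey (@matching_rel t) g)%N.
  move=> t ht; apply: lower_bound => //; apply: size_ramsey_spec; exact: arrow_exists.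
split=> //.
have hde := maxdeg_le_nedges sg ne.
have he := nedges_gt0 ne.
rewrite /r_infty.
have H : eventually (fun n => (INR (maxdeg g) / INR (nedges g) <=
   INR (size_ramsey (@matching_rel n) g) / (INR n * INR (nedges g)))%R).
  exists 1%N => n /leP hn.
  have hn0 : (0 < INR n)%R by apply: lt_0_INR; apply/leP.
  have he0 : (0 < INR (nedges g))%R by apply: lt_0_INR; apply/leP.
  apply Rle_trans with (INR (n * maxdeg g) / (INR n * INR (nedges g)))%R.
    right; rewrite mult_INR; field; split; apply: Rgt_not_eq; assumption.
  rewrite /Rdiv; apply: Rmult_le_compat_r.
    by left; apply: Rinv_0_lt_compat; apply: Rmult_lt_0_compat.
  apply: le_INR; apply/leP.
  have := LB n hn.
  have -> : (n * maxdeg g = (n - 1) * maxdeg g + maxdeg g)%N.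
    by rewrite -{1}(subnK hn) mulnDl mul1n.
  lia.
have := Lim_seq_le_loc _ _ H.
by rewrite Lim_seq_const.
Qed.
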